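(* For each semiquasitriangular Hopf algebra $(H,R)$ with Drinfeld element $u=S(R^{(2)})R^{(1)}$, one has $S^2(u)=u$, $S^2(u^{-1})=u^{-1}$ and $uS(u)=S(u)u$.
   Context: All vector spaces are over a field $k$, $\otimes=\otimes_k$. For a Hopf algebra $H$ with comultiplication $\Delta$, counit $\epsilon$, antipode $S$, we use Sweedler notation $\Delta(h)=h_1\otimes h_2$, etc. $\operatorname{Z}(H)$ is the centre of $H$. For $R\in H\otimes H$ we write $R=R^{(1)}\otimes R^{(2)}$ (summation understood); $R'^{(1)}\otimes R'^{(2)}$ denotes another copy of $R$. Definition (semiquasitriangular Hopf algebra): a pair $(H,R)$ with $H$ a Hopf algebra with bijective antipode and $R\in H\otimes H$ invertible such that (1) $R^{(1)}_1\otimes R^{(1)}_2\otimes R^{(2)} = R^{(1)}\otimes R'^{(1)}\otimes R^{(2)}R'^{(2)}$; (2) $R^{(1)}\otimes R^{(2)}_1\otimes R^{(2)}_2 = R^{(1)}R'^{(1)}\otimes R'^{(2)}\otimes R^{(2)}$; (3) $R^{(1)}\otimes R^{(2)}_2R'^{(1)}\otimes R^{(2)}_1R'^{(2)} = R^{(1)}\otimes R'^{(1)}R^{(2)}_1\otimes R'^{(2)}R^{(2)}_2$; (4) $R^{(1)}_2R'^{(1)}\otimes R^{(1)}_1R'^{(2)}\otimes R^{(2)} = R'^{(1)}R^{(1)}_1\otimes R'^{(2)}R^{(1)}_2\otimes R^{(2)}$; (5) $\nu(h):=R^{(2)}h_2R'^{(2)}\otimes S(h_1)S(R^{(1)})h_3R'^{(1)}\in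 H\otimes\operatorname{Z}(H)$ for all $h\in H$; (6) $\nu(h)=R^{(1)}h_2R'^{(1)}\otimes S(R'^{(2)})S(h_1)R^{(2)}h_3$ for all $h\in H$. The Drinfeld element $u$ is invertible (with $u^{-1}=R^{(2)}S^2(R^{(1)})$). *)

(* Defs.v *)
(* Elements of H (x) H and H (x) H (x) H are represented by finite formal sums
   (lists of pairs/triples of elements of H).  Two formal sums are equal as
   elements of the tensor product iff they agree under every multilinear map
   into every k-vector space (universal property of the tensor product). *)
From HB Require Import structures.
From mathcomp Require Import all_boot all_order all_algebra.
Set Implicit Arguments. Unset Strict Implicit. Unset Printing Implicit Defensive.
Import GRing.Theory.
Local Open Scope ring_scope.

Section Hopf.
Variables (k : fieldType) (H : algType k).

Definition lin_in (W : lmodType k) (g : H -> W) : Prop :=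
  forall (a : k) (x y : H), g (a *: x + y) = a *: g x + g y.

Definition teq2 (s t : seq (H * H)) : Prop :=
  forall (W : lmodType k) (f : H -> H -> W),
    (forall b, lin_in (fun a => f a b)) -> (forall a, lin_in (f a)) ->
    \sum_(p <- s) f p.1 p.2 = \sum_(p <- t) f p.1 p.2.

Definition teq3 (s t : seq (H * H * H)) : Prop :=
  forall (W : lmodType k) (f : H -> H -> H -> W),
    (forall b c, lin_in (fun a => f a b c)) ->
    (forall a c, lin_in (fun b => f a b c)) ->
    (forall a b, lin_in (f a b)) ->
    \sum_(p <- s) f p.1.1 p.1.2 p.2 = \sum_(p <- t) f p.1.1 p.1.2 p.2.

Definition tmul2 (s t : seq (H * H)) : seq (H * H) :=
  [seq (p.1 * q.1, p.2 * q.2) | p <- s, q <- t].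

Definition central (z : H) : Prop := forall x : H, x * z = z * x.

(* Hopf algebra with bijective antipode: comultiplication D (Sweedler:
   D h = sum h_1 (x) h_2), counit e, antipode S. *)
Record hopf_algebra (D : H -> seq (H * H)) (e : H -> k) (S : H -> H) : Prop := {
  hD_lin : forall (a : k) (x y : H),
     teq2 (D (a *: x + y)) ([seq (a *: p.1, p.2) | p <- D x] ++ D y);
  hD_coassoc : forall h : H,
     teq3 [seq (q.1, q.2, p.2) | p <- D h, q <- D p.1]
          [seq (p.1, q.1, q.2) | p <- D h, q <- D p.2];
  he_lin : forall (a : k) (x y : H), e (a *: x + y) = a * e x + e y;
  he_counitl : forall h : H, \sum_(p <- D h) e p.1 *: p.2 = h;
  he_counitr : forall h : H, \sum_(p <- D h) e p.2 *: p.1 = h;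
  hD_mul : forall x y : H, teq2 (D (x * y)) (tmul2 (D x) (D y));
  hD_one : teq2 (D 1) [:: (1, 1)];
  he_mul : forall x y : H, e (x * y) = e x * e y;
  he_one : e 1 = 1;
  hS_lin : forall (a : k) (x y : H), S (a *: x + y) = a *: S x + S y;
  hS_antipodel : forall h : H, \sum_(p <- D h) S p.1 * p.2 = (e h)%:A;
  hS_antipoder : forall h : H, \sum_(p <- D h) p.1 * S p.2 = (e h)%:A;
  hS_bij : bijective S
}.

(* h_1 (x) h_2 (x) h_3 := (D (x) id) D h *)
Definition D3 (D : H -> seq (H * H)) (h : H) : seq (H * H * H) :=
  [seq (q.1, q.2, p.2) | p <- D h, q <- D p.1].

(* nu(h) = R2 h_2 R'2 (x) S(h_1) S(R1) h_3 R'1 *)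
Definition nu (D : H -> seq (H * H)) (S : H -> H) (R : seq (H * H)) (h : H)
  : seq (H * H) :=
  [seq (p.2 * tq.1.1.2 * tq.2.2, S tq.1.1.1 * S p.1 * tq.1.2 * tq.2.1)
  | p <- R, tq <- [seq (t, q) | t <- D3 D h, q <- R]].

(* R1 h_2 R'1 (x) S(R'2) S(h_1) R2 h_3 *)
Definition nu' (D : H -> seq (H * H)) (S : H -> H) (R : seq (H * H)) (h : H)
  : seq (H * H) :=
  [seq (p.1 * tq.1.1.2 * tq.2.1, S tq.2.2 * S tq.1.1.1 * p.2 * tq.1.2)
  | p <- R, tq <- [seq (t, q) | t <- D3 D h, q <- R]].

Record semiquasitriangular (D : H -> seq (H * H)) (S : H -> H)
    (R : seq (H * H)) : Prop := {
  sq_inv : exists Ri : seq (H * H),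
      teq2 (tmul2 R Ri) [:: (1, 1)] /\ teq2 (tmul2 Ri R) [:: (1, 1)];
  sq1 : teq3 [seq (q.1, q.2, p.2) | p <- R, q <- D p.1]
             [seq (p.1, q.1, p.2 * q.2) | p <- R, q <- R];
  sq2 : teq3 [seq (p.1, q.1, q.2) | p <- R, q <- D p.2]
             [seq (p.1 * q.1, q.2, p.2) | p <- R, q <- R];
  sq3 : teq3 [seq (p.1, dq.1.2 * dq.2.1, dq.1.1 * dq.2.2)
             | p <- R, dq <- [seq (d, q) | d <- D p.2, q <- R]]
             [seq (p.1, dq.2.1 * dq.1.1, dq.2.2 * dq.1.2)
             | p <- R, dq <- [seq (d, q) | d <- D p.2, q <- R]];
  sq4 : teq3 [seq (dq.1.2 * dq.2.1, dq.1.1 * dq.2.2, p.2)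
             | p <- R, dq <- [seq (d, q) | d <- D p.1, q <- R]]
             [seq (dq.2.1 * dq.1.1, dq.2.2 * dq.1.2, p.2)
             | p <- R, dq <- [seq (d, q) | d <- D p.1, q <- R]];
  (* nu(h) lies in H (x) Z(H) *)
  sq5 : forall h : H, exists t : seq (H * H),
      (forall p, p \in t -> central p.2) /\ teq2 (nu D S R h) t;
  sq6 : forall h : H, teq2 (nu D S R h) (nu' D S R h)
}.

Definition drinfeld (S : H -> H) (R : seq (H * H)) : H :=
  \sum_(p <- R) S p.2 * p.1.

End Hopf.

(* Main.v *)
Require Import Defs.
From HB Require Import structures.
From mathcomp Require Import all_boot all_order all_algebra.
Set Implicit Arguments. Unset Strict Implicit. Unset Printing Implicit Defensive.
Import GRing.Theory.
Local Open Scope ring_scope.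

Section Main.
Variables (k : fieldType) (H : algType k) (D : H -> seq (H * H)) (e : H -> k)
  (S : H -> H) (R : seq (H * H)).
Hypothesis hH : hopf_algebra D e S.
Hypothesis hR : semiquasitriangular D S R.

Lemma lin_sum (W : lmodType k) I (s : seq I) (F : I -> H -> W) :
  (forall i, lin_in (F i)) -> lin_in (fun a => \sum_(i <- s) F i a).
Proof.
move=> hF a x y; rewrite scaler_sumr -big_split /=.
by apply: eq_bigr => i _; rewrite hF.
Qed.

Lemma lin0 (W : lmodType k) (F : H -> W) : lin_in F -> F 0 = 0.
Proof.
move=> hF; have := hF 1 0 0; rewrite !scale1r addr0 => h.
by have := congr1 (fun z => z - F 0) h; rewrite addrK subrr.
Qed.

Lemma linD (W : lmodType k) (F : H -> W) (hF : lin_in F) x y : F (x + y) = F x + F y.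
Proof. by have := hF 1 x y; rewrite !scale1r. Qed.

Lemma linZ (W : lmodType k) (F : H -> W) (hF : lin_in F) a x : F (a *: x) = a *: F x.
Proof. by have := hF a x 0; rewrite !addr0 (lin0 hF) addr0. Qed.

Lemma linS (W : lmodType k) (F : H -> W) (hF : lin_in F) I (s : seq I) (G : I -> H) :
  F (\sum_(i <- s) G i) = \sum_(i <- s) F (G i).
Proof.
elim: s => [|i s IH]; first by rewrite !big_nil (lin0 hF).
by rewrite !big_cons (linD hF) IH.
Qed.

Lemma linSZ (W : lmodType k) (F : H -> W) (hF : lin_in F) I (s : seq I) (c : I -> k) (G : I -> H) :
  F (\sum_(i <- s) c i *: G i) = \sum_(i <- s) c i *: F (G i).
Proof.
by rewrite (linS hF); apply: eq_bigr => i _; rewrite (linZ hF).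
Qed.

Lemma Slin a x y : S (a *: x + y) = a *: S x + S y.
Proof. exact (hS_lin hH a x y). Qed.
Lemma elin a x y : e (a *: x + y) = a * e x + e y.
Proof. exact (he_lin hH a x y). Qed.
Lemma linS_ : lin_in S. Proof. exact: Slin. Qed.

Lemma lin_D (W : lmodType k) (G : H * H -> W) :
  (forall b, lin_in (fun a => G (a, b))) -> (forall a, lin_in (fun b => G (a, b))) ->
  lin_in (fun h => \sum_(p <- D h) G p).
Proof.
move=> h1 h2 a x y.
have E : forall h, \sum_(p <- D h) G p = \sum_(p <- D h) G (p.1, p.2).
  by move=> h; apply: eq_bigr => -[].
rewrite !E.
have := hD_lin hH a x y (f := fun u v => G (u, v)) h1 h2.
rewrite big_cat big_map /= => ->; congr (_ + _).
  rewrite scaler_sumr; apply: eq_bigr => -[u v] _ /=.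
  by rewrite (linZ (h1 v)).
Qed.


Section Sums.
Variable (W : lmodType k).
Definition tril (f : H -> H -> H -> W) :=
  [/\ forall b c, lin_in (fun a => f a b c), forall a c, lin_in (fun b => f a b c)
    & forall a b, lin_in (f a b)].
Definition bil (f : H -> H -> W) :=
  (forall b, lin_in (fun a => f a b)) /\ (forall a, lin_in (f a)).

Lemma coassoc_sum h f : tril f ->
  \sum_(p <- D h) \sum_(q <- D p.1) f q.1 q.2 p.2 =
  \sum_(p <- D h) \sum_(q <- D p.2) f p.1 q.1 q.2.
Proof. by case=> h1 h2 h3; have := hD_coassoc hH h h1 h2 h3; rewrite !big_allpairs_dep. Qed.

Lemma Dmul_sum x y f : bil f ->
  \sum_(p <- D (x * y)) f p.1 p.2 =
  \sum_(p <- D x) \sum_(q <- D y) f (p.1 * q.1) (p.2 * q.2).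
Proof. by case=> h1 h2; have := hD_mul hH x y h1 h2; rewrite /tmul2 big_allpairs_dep. Qed.

Lemma D1_sum f : bil f -> \sum_(p <- D 1) f p.1 p.2 = f 1 1.
Proof. by case=> h1 h2; have := hD_one hH h1 h2; rewrite big_seq1. Qed.

Lemma sq1_sum f : tril f ->
  \sum_(p <- R) \sum_(q <- D p.1) f q.1 q.2 p.2 =
  \sum_(p <- R) \sum_(q <- R) f p.1 q.1 (p.2 * q.2).
Proof. by case=> h1 h2 h3; have := sq1 hR h1 h2 h3; rewrite !big_allpairs_dep. Qed.

Lemma sq2_sum f : tril f ->
  \sum_(p <- R) \sum_(q <- D p.2) f p.1 q.1 q.2 =
  \sum_(p <- R) \sum_(q <- R) f (p.1 * q.1) q.2 p.2.
Proof. by case=> h1 h2 h3; have := sq2 hR h1 h2 h3; rewrite !big_allpairs_dep. Qed.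

Lemma sq3_sum f : tril f ->
  \sum_(p <- R) \sum_(d <- D p.2) \sum_(q <- R) f p.1 (d.2 * q.1) (d.1 * q.2) =
  \sum_(p <- R) \sum_(d <- D p.2) \sum_(q <- R) f p.1 (q.1 * d.1) (q.2 * d.2).
Proof.
case=> h1 h2 h3; have := sq3 hR h1 h2 h3; rewrite !big_allpairs_dep /=.
by under eq_bigr do rewrite big_allpairs; under [RHS]eq_bigr do rewrite big_allpairs.
Qed.

Lemma sq4_sum f : tril f ->
  \sum_(p <- R) \sum_(d <- D p.1) \sum_(q <- R) f (d.2 * q.1) (d.1 * q.2) p.2 =
  \sum_(p <- R) \sum_(d <- D p.1) \sum_(q <- R) f (q.1 * d.1) (q.2 * d.2) p.2.
Proof.
case=> h1 h2 h3; have := sq4 hR h1 h2 h3; rewrite !big_allpairs_dep /=.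
by under eq_bigr do rewrite big_allpairs; under [RHS]eq_bigr do rewrite big_allpairs.
Qed.
End Sums.

Ltac lin_leaf t := move=> ? ? ? /=;
  repeat progress (rewrite ?mulrDr ?mulrDl -?scalerAr -?scalerAl ?Slin ?elin
                     ?scalerDl -?scalerA ?scalerDr; try t);
  try done; try (by rewrite !scalerA mulrC);
  try (by rewrite !scalerA; congr (_ + _); congr (_ *: _); rewrite mulrC).
Ltac solve_lin t := repeat (apply lin_sum => ?); lin_leaf t.
Ltac solve_bil t := split => ?; solve_lin t.
Ltac solve_tril t := split => ? ?; solve_lin t.

Lemma counitl_app (W : lmodType k) (F : H -> W) (hF : lin_in F) h :
  \sum_(p <- D h) e p.1 *: F p.2 = F h.
Proof. by rewrite -{2}(he_counitl hH h) (linSZ hF). Qed.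

Lemma counitr_app (W : lmodType k) (F : H -> W) (hF : lin_in F) h :
  \sum_(p <- D h) e p.2 *: F p.1 = F h.
Proof. by rewrite -{2}(he_counitr hH h) (linSZ hF). Qed.

Lemma antil_app (W : lmodType k) (F : H -> W) (hF : lin_in F) h :
  \sum_(p <- D h) F (S p.1 * p.2) = e h *: F 1.
Proof. by rewrite -(linS hF) (hS_antipodel hH h) (linZ hF). Qed.

Lemma antir_app (W : lmodType k) (F : H -> W) (hF : lin_in F) h :
  \sum_(p <- D h) F (p.1 * S p.2) = e h *: F 1.
Proof. by rewrite -(linS hF) (hS_antipoder hH h) (linZ hF). Qed.

Lemma lin_lr (u v : H) : lin_in (fun a : H => u * a * v).
Proof. by solve_lin idtac. Qed.

Lemma S1 : S 1 = 1.
Proof.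
have := hS_antipodel hH 1; rewrite (he_one hH) scale1r.
rewrite (D1_sum (f := fun a b => S a * b)) ?mulr1 //.
by solve_bil idtac.
Qed.


Lemma antir_step (a b c : H) h :
  \sum_(r <- D h) a * (b * r.1) * S r.2 * c = e h *: (a * b * c).
Proof.
transitivity (\sum_(r <- D h) (fun z => a * b * z * c) (r.1 * S r.2)).
  by apply: eq_bigr => r _; rewrite /= !mulrA.
by rewrite (antir_app (F := fun z => a * b * z * c)) ?mulr1 //; solve_lin idtac.
Qed.

Lemma Smul x y : S (x * y) = S y * S x.
Proof.
pose TL := \sum_(p <- D x) \sum_(q <- D p.1) \sum_(p' <- D y) \sum_(q' <- D p'.1)
   S (q.1 * q'.1) * (q.2 * q'.2) * S p'.2 * S p.2.
pose TR := \sum_(p <- D x) \sum_(q <- D p.2) \sum_(p' <- D y) \sum_(q' <- D p'.2)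
   S (p.1 * p'.1) * (q.1 * q'.1) * S q'.2 * S q.2.
have eLR : TL = TR.
  rewrite /TL (coassoc_sum x (f := fun a1 a2 a3 => \sum_(p' <- D y) \sum_(q' <- D p'.1)
      S (a1 * q'.1) * (a2 * q'.2) * S p'.2 * S a3)); last by solve_tril idtac.
  apply: eq_bigr => p _; apply: eq_bigr => q _.
  rewrite (coassoc_sum y (f := fun b1 b2 b3 => S (p.1 * b1) * (q.1 * b2) * S b3 * S q.2)) //.
  by solve_tril idtac.
have eL : TL = S y * S x.
  transitivity (\sum_(p <- D x) \sum_(p' <- D y) (e p.1 * e p'.1) *: (S p'.2 * S p.2)).
    apply: eq_bigr => p _; rewrite exchange_big; apply: eq_bigr => p' _.
    rewrite -(Dmul_sum _ _ (f := fun u v => S u * v * S p'.2 * S p.2)); last by solve_bil idtac.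
    rewrite (antil_app (F := fun z => z * S p'.2 * S p.2)) ?mul1r ?(he_mul hH) //.
    by solve_lin idtac.
  transitivity (\sum_(p <- D x) e p.1 *: (S y * S p.2)).
    apply: eq_bigr => p _.
    rewrite -(counitl_app (F := fun z => S z * S p.2)); last by solve_lin idtac.
    by rewrite scaler_sumr; apply: eq_bigr => p' _; rewrite scalerA.
  rewrite (counitl_app (F := fun z => S y * S z)) //; by solve_lin idtac.
have eR : TR = S (x * y).
  transitivity (\sum_(p <- D x) \sum_(q <- D p.2) \sum_(p' <- D y)
      e p'.2 *: (S (p.1 * p'.1) * q.1 * S q.2)).
    by apply: eq_bigr => p _; apply: eq_bigr => q _; apply: eq_bigr => p' _;
      rewrite antir_step.
  transitivity (\sum_(p <- D x) \sum_(p' <- D y) e p'.2 *: (e p.2 *: S (p.1 * p'.1))).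
    apply: eq_bigr => p _; rewrite exchange_big; apply: eq_bigr => p' _.
    rewrite -scaler_sumr; congr (_ *: _).
    transitivity (\sum_(q <- D p.2) (fun z => S (p.1 * p'.1) * z) (q.1 * S q.2)).
      by apply: eq_bigr => q _; rewrite /= !mulrA.
    by rewrite (antir_app (F := fun z => S (p.1 * p'.1) * z)) ?mulr1 //; solve_lin idtac.
  transitivity (\sum_(p <- D x) e p.2 *: S (p.1 * y)).
    apply: eq_bigr => p _.
    rewrite -(counitr_app (F := fun z => S (p.1 * z)) _ y); last by solve_lin idtac.
    by rewrite scaler_sumr; apply: eq_bigr => p' _; rewrite !scalerA mulrC.
  by rewrite (counitr_app (F := fun z => S (z * y))) //; solve_lin idtac.
by rewrite -eR -eLR eL.
Qed.

Lemma SS2 x y : S (S (x * y)) = S (S x) * S (S y).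
Proof. by rewrite !Smul. Qed.

Variable Si : H -> H.
Hypothesis SiK : cancel S Si.
Hypothesis SKi : cancel Si S.

Lemma Sinj : injective S. Proof. exact: can_inj SiK. Qed.

Lemma Silin a x y : Si (a *: x + y) = a *: Si x + Si y.
Proof. by apply: Sinj; rewrite Slin !SKi. Qed.

Lemma Simul x y : Si (x * y) = Si y * Si x.
Proof. by apply: Sinj; rewrite Smul !SKi. Qed.

Lemma Si1 : Si 1 = 1.
Proof. by rewrite -{1}S1 SiK. Qed.

Lemma linSi : lin_in Si. Proof. exact: Silin. Qed.

Lemma Si_anti h : \sum_(p <- D h) Si p.2 * p.1 = (e h)%:A.
Proof.
apply: Sinj; rewrite (linS linS_).
under eq_bigr do rewrite Smul SKi.
by rewrite (hS_antipodel hH) (linZ linS_) S1.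
Qed.

Lemma antiSi_app (W : lmodType k) (F : H -> W) (hF : lin_in F) h :
  \sum_(p <- D h) F (Si p.2 * p.1) = e h *: F 1.
Proof. by rewrite -(linS hF) Si_anti (linZ hF). Qed.

Variable Ri : seq (H * H).
Hypothesis hRi : teq2 (tmul2 R Ri) [:: (1, 1)].

Lemma Ri_sum (W : lmodType k) (f : H -> H -> W) : bil f ->
  \sum_(p <- R) \sum_(q <- Ri) f (p.1 * q.1) (p.2 * q.2) = f 1 1.
Proof. by case=> h1 h2; have := hRi h1 h2; rewrite /tmul2 big_allpairs_dep big_seq1. Qed.

Lemma R_cancel u v :
  (forall (W : lmodType k) (f : H -> H -> W), bil f ->
     \sum_(p <- R) f p.1 p.2 = \sum_(p <- R) f (u * p.1) (v * p.2)) ->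
  forall (W : lmodType k) (g : H -> H -> W), bil g -> g 1 1 = g u v.
Proof.
move=> hyp W g hg; have [g1 g2] := hg.
rewrite -(Ri_sum hg).
rewrite (hyp _ (fun a b => \sum_(q <- Ri) g (a * q.1) (b * q.2))); last by solve_bil ltac:(rewrite ?g1 ?g2).
transitivity (\sum_(p <- R) \sum_(q <- Ri) (fun a b => g (u * a) (v * b)) (p.1 * q.1) (p.2 * q.2)).
  by apply: eq_bigr => p _; apply: eq_bigr => q _; rewrite /= !mulrA.
by rewrite (Ri_sum (f := fun a b => g (u * a) (v * b))) ?mulr1 //; solve_bil ltac:(rewrite ?g1 ?g2).
Qed.

Lemma bil_l (W : lmodType k) (f : H -> H -> W) : bil f ->
  forall b a x y, f (a *: x + y) b = a *: f x b + f y b.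
Proof. by case. Qed.
Lemma bil_r (W : lmodType k) (f : H -> H -> W) : bil f ->
  forall b a x y, f b (a *: x + y) = a *: f b x + f b y.
Proof. by case. Qed.

Lemma bil_lZ (W : lmodType k) (f : H -> H -> W) : bil f ->
  forall b a x, f (a *: x) b = a *: f x b.
Proof. by case=> h1 h2 b a x; rewrite (linZ (h1 b)). Qed.
Lemma bil_rZ (W : lmodType k) (f : H -> H -> W) : bil f ->
  forall b a x, f b (a *: x) = a *: f b x.
Proof. by case=> h1 h2 b a x; rewrite (linZ (h2 b)). Qed.

Lemma eR1 : \sum_(p <- R) e p.1 *: p.2 = 1.
Proof.
set c := \sum_(p <- R) e p.1 *: p.2.
have hyp : forall (W : lmodType k) (f : H -> H -> W), bil f ->
    \sum_(p <- R) f p.1 p.2 = \sum_(p <- R) f (1 * p.1) (c * p.2).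
  move=> W f hf; have [f1 f2] := hf.
  transitivity (\sum_(p <- R) \sum_(q <- D p.1) (fun a b c0 => e a *: f b c0) q.1 q.2 p.2).
    by apply: eq_bigr => p _ /=; rewrite (counitl_app (F := fun z => f z p.2)).
  rewrite (sq1_sum (f := fun a b c0 => e a *: f b c0)) /=; last by solve_tril ltac:(rewrite ?(bil_l hf) ?(bil_r hf) ?(bil_lZ hf) ?(bil_rZ hf)).
  rewrite exchange_big; apply: eq_bigr => q _ /=.
  rewrite mul1r mulr_suml (linS (f2 q.1)); apply: eq_bigr => p _.
  by rewrite -scalerAl (linZ (f2 q.1)).
have := R_cancel hyp (g := fun a b => e a *: b).
rewrite /= (he_one hH) !scale1r => -> //.
by solve_bil idtac.
Qed.

Lemma eR2 : \sum_(p <- R) e p.2 *: p.1 = 1.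
Proof.
set c := \sum_(p <- R) e p.2 *: p.1.
have hyp : forall (W : lmodType k) (f : H -> H -> W), bil f ->
    \sum_(p <- R) f p.1 p.2 = \sum_(p <- R) f (c * p.1) (1 * p.2).
  move=> W f hf; have [f1 f2] := hf.
  transitivity (\sum_(p <- R) \sum_(q <- D p.2) (fun a b c0 => e c0 *: f a b) p.1 q.1 q.2).
    by apply: eq_bigr => p _ /=; rewrite (counitr_app (F := fun z => f p.1 z)).
  rewrite (sq2_sum (f := fun a b c0 => e c0 *: f a b)) /=; last by solve_tril ltac:(rewrite ?(bil_l hf) ?(bil_r hf) ?(bil_lZ hf) ?(bil_rZ hf)).
  rewrite exchange_big; apply: eq_bigr => q _ /=.
  rewrite mul1r mulr_suml (linS (f1 q.2)); apply: eq_bigr => p _.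
  by rewrite -scalerAl (linZ (f1 q.2)).
have := R_cancel hyp (g := fun a b => e b *: a).
rewrite /= (he_one hH) !scale1r => -> //.
by solve_bil idtac.
Qed.

Lemma Sinv (W : lmodType k) (f : H -> H -> W) : bil f ->
  \sum_(p <- R) \sum_(q <- R) f (S p.1 * q.1) (p.2 * q.2) = f 1 1.
Proof.
move=> hf; have [f1 f2] := hf.
rewrite -(sq1_sum (f := fun a b c => f (S a * b) c)) /=;
  last by solve_tril ltac:(rewrite ?(bil_l hf) ?(bil_r hf) ?(bil_lZ hf) ?(bil_rZ hf)).
transitivity (\sum_(p <- R) f 1 (e p.1 *: p.2)).
  apply: eq_bigr => p _.
  by rewrite (antil_app (F := fun z => f z p.2)) // (linZ (f2 1)).
by rewrite -(linS (f2 1)) eR1.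
Qed.

Lemma Siinv (W : lmodType k) (f : H -> H -> W) : bil f ->
  \sum_(p <- R) \sum_(q <- R) f (p.1 * q.1) (Si p.2 * q.2) = f 1 1.
Proof.
move=> hf; have [f1 f2] := hf.
rewrite -(sq2_sum (f := fun a b c => f a (Si c * b))) /=;
  last by solve_tril ltac:(rewrite ?(bil_l hf) ?(bil_r hf) ?Silin).
transitivity (\sum_(p <- R) f (e p.2 *: p.1) 1).
  apply: eq_bigr => p _.
  by rewrite (antiSi_app (F := fun z => f p.1 z)) // (linZ (f1 1)).
by rewrite -(linS (f1 1)) eR2.
Qed.

Lemma linv (g1 g2 : H -> H) :
  (forall (W : lmodType k) (f : H -> H -> W), bil f ->
    \sum_(a <- R) \sum_(q <- R) f (g1 a.1 * q.1) (g2 a.2 * q.2) = f 1 1) ->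
  forall (W : lmodType k) (f : H -> H -> W), bil f ->
    \sum_(a <- R) f (g1 a.1) (g2 a.2) = \sum_(r <- Ri) f r.1 r.2.
Proof.
move=> hyp W f hf; have [f1 f2] := hf.
transitivity (\sum_(a <- R) \sum_(p <- R) \sum_(r <- Ri)
     f (g1 a.1 * (p.1 * r.1)) (g2 a.2 * (p.2 * r.2))).
  apply: eq_bigr => a _.
  rewrite (Ri_sum (f := fun x y => f (g1 a.1 * x) (g2 a.2 * y))) ?mulr1 //.
  by solve_bil ltac:(rewrite ?(bil_l hf) ?(bil_r hf) ?(bil_lZ hf) ?(bil_rZ hf)).
transitivity (\sum_(a <- R) \sum_(r <- Ri) \sum_(p <- R)
     f (g1 a.1 * p.1 * r.1) (g2 a.2 * p.2 * r.2)).
  apply: eq_bigr => a _; rewrite exchange_big; apply: eq_bigr => r _.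
  by apply: eq_bigr => p _; rewrite !mulrA.
rewrite exchange_big; apply: eq_bigr => r _.
have := hyp _ (fun x y => f (x * r.1) (y * r.2)); rewrite /= => -> ; first by rewrite !mul1r.
by solve_bil ltac:(rewrite ?(bil_l hf) ?(bil_r hf) ?(bil_lZ hf) ?(bil_rZ hf)).
Qed.

Lemma SS (W : lmodType k) (f : H -> H -> W) : bil f ->
  \sum_(p <- R) f (S p.1) (S p.2) = \sum_(p <- R) f p.1 p.2.
Proof.
move=> hf; have [f1 f2] := hf.
have hf' : bil (fun a b => f a (S b)).
  by solve_bil ltac:(rewrite ?(bil_l hf) ?(bil_r hf) ?(bil_lZ hf) ?(bil_rZ hf)).
have A := linv (g1 := S) (g2 := id) (@Sinv) hf'.
have B := linv (g1 := id) (g2 := Si) (@Siinv) hf'.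
rewrite /= in A B; rewrite A -B.
by apply: eq_bigr => p _; rewrite SKi.
Qed.

Lemma S2u : S (S (drinfeld S R)) = drinfeld S R.
Proof.
rewrite /drinfeld !(linS linS_).
under eq_bigr do rewrite Smul.
under eq_bigr do rewrite Smul.
rewrite (SS (f := fun a b => S (S b) * S a)); last by solve_bil idtac.
by rewrite (SS (f := fun a b => S b * a)) //; solve_bil idtac.
Qed.

Definition uu := drinfeld S R.
Definition K h := \sum_(c <- D h) S c.2 * uu * c.1.

Lemma lin_comp (W : lmodType k) (g : H -> H) (F : H -> W) :
  lin_in g -> lin_in F -> lin_in (fun a => F (g a)).
Proof. by move=> hg hF a x y; rewrite hg hF. Qed.

Lemma linK : lin_in K.
Proof. by rewrite /K; apply (lin_D (G := fun c => S c.2 * uu * c.1)) => ?; solve_lin idtac. Qed.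

Lemma KR (W : lmodType k) (F : H -> H -> W) : bil F ->
  \sum_(p <- R) F p.1 (K p.2) = \sum_(p <- R) F p.1 (e p.2 *: uu).
Proof.
move=> hF; have [F1 F2] := hF.
transitivity (\sum_(p <- R) \sum_(d <- D p.2) \sum_(q <- R) F p.1 (S (q.2 * d.2) * (q.1 * d.1))).
  apply: eq_bigr => p _.
  rewrite /K (linS (F2 p.1)); apply: eq_bigr => c _.
  rewrite /uu /drinfeld mulr_sumr mulr_suml (linS (F2 p.1)); apply: eq_bigr => q _.
  by rewrite Smul !mulrA.
rewrite -(sq3_sum (f := fun a b c => F a (S c * b))) /=;
  last by solve_tril ltac:(rewrite ?(bil_l hF) ?(bil_r hF)).
apply: eq_bigr => p _; rewrite exchange_big /=; symmetry.
transitivity (\sum_(q <- R) e p.2 *: F p.1 (S q.2 * 1 * q.1)).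
  rewrite (linZ (F2 p.1)) /uu /drinfeld (linS (F2 p.1)) scaler_sumr.
  by apply: eq_bigr => q _; rewrite mulr1.
apply: eq_bigr => q _.
transitivity (\sum_(d <- D p.2) (fun z => F p.1 (S q.2 * z * q.1)) (S d.1 * d.2)).
  by rewrite (antil_app (F := fun z => F p.1 (S q.2 * z * q.1))) //; solve_lin ltac:(rewrite ?(bil_l hF) ?(bil_r hF)).
by apply: eq_bigr => d _; rewrite /= Smul !mulrA.
Qed.

Lemma KL (W : lmodType k) (F : H -> H -> W) : bil F ->
  \sum_(p <- R) F (K p.1) p.2 = \sum_(p <- R) F (e p.1 *: uu) p.2.
Proof.
move=> hF; have [F1 F2] := hF.
transitivity (\sum_(p <- R) \sum_(d <- D p.1) \sum_(q <- R) F (S (q.2 * d.2) * (q.1 * d.1)) p.2).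
  apply: eq_bigr => p _.
  rewrite /K (linS (F1 p.2)); apply: eq_bigr => c _.
  rewrite /uu /drinfeld mulr_sumr mulr_suml (linS (F1 p.2)); apply: eq_bigr => q _.
  by rewrite Smul !mulrA.
rewrite -(sq4_sum (f := fun a b c => F (S b * a) c)) /=;
  last by solve_tril ltac:(rewrite ?(bil_l hF) ?(bil_r hF)).
apply: eq_bigr => p _; rewrite exchange_big /=; symmetry.
transitivity (\sum_(q <- R) e p.1 *: F (S q.2 * 1 * q.1) p.2).
  rewrite (linZ (F1 p.2)) /uu /drinfeld (linS (F1 p.2)) scaler_sumr.
  by apply: eq_bigr => q _; rewrite mulr1.
apply: eq_bigr => q _.
transitivity (\sum_(d <- D p.1) (fun z => F (S q.2 * z * q.1) p.2) (S d.1 * d.2)).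
  by rewrite (antil_app (F := fun z => F (S q.2 * z * q.1) p.2)) //; solve_lin ltac:(rewrite ?(bil_l hF) ?(bil_r hF)).
by apply: eq_bigr => d _; rewrite /= Smul !mulrA.
Qed.

Lemma idA y h : \sum_(d <- D h) S (S d.2) * (\sum_(c <- D d.1) S c.2 * y * c.1) = y * h.
Proof.
transitivity (\sum_(d <- D h) \sum_(c <- D d.1)
    (fun a b c0 => S (S c0) * (S b * y * a)) c.1 c.2 d.2).
  by apply: eq_bigr => d _; rewrite mulr_sumr.
rewrite (coassoc_sum h (f := fun a b c0 => S (S c0) * (S b * y * a))) /=;
  last by solve_tril idtac.
transitivity (\sum_(d <- D h) e d.2 *: (y * d.1)).
  apply: eq_bigr => d _.
  transitivity (\sum_(c <- D d.2) (fun z => S z * y * d.1) (c.1 * S c.2)).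
    by apply: eq_bigr => c _; rewrite /= Smul !mulrA.
  by rewrite (antir_app (F := fun z => S z * y * d.1)) ?S1 ?mul1r //; solve_lin idtac.
by rewrite (counitr_app (F := fun z => y * z)) //; solve_lin idtac.
Qed.

Lemma LR (W : lmodType k) (f : H -> H -> W) : bil f ->
  \sum_(p <- R) f p.1 (S (S p.2) * uu) = \sum_(p <- R) f p.1 (uu * p.2).
Proof.
move=> hf; have [f1 f2] := hf; symmetry.
transitivity (\sum_(p <- R) \sum_(d <- D p.2) f p.1 (S (S d.2) * K d.1)).
  by apply: eq_bigr => p _; rewrite -(idA uu p.2) (linS (f2 p.1)).
have tr : tril (fun a b c => f a (S (S c) * K b)).
  split => [b c|a c|a b].
  - by solve_lin ltac:(rewrite ?(bil_l hf) ?(bil_r hf) ?(bil_lZ hf) ?(bil_rZ hf)).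
  - apply (lin_comp (g := K) (F := fun z => f a (S (S c) * z)) linK).
    by solve_lin ltac:(rewrite ?(bil_l hf) ?(bil_r hf) ?(bil_lZ hf) ?(bil_rZ hf)).
  - by solve_lin ltac:(rewrite ?(bil_l hf) ?(bil_r hf) ?(bil_lZ hf) ?(bil_rZ hf)).
rewrite (sq2_sum tr) /= exchange_big /=.
rewrite (KR (F := fun a b => \sum_(p <- R) f (p.1 * a) (S (S p.2) * b))) /=;
  last by solve_bil ltac:(rewrite ?(bil_l hf) ?(bil_r hf) ?(bil_lZ hf) ?(bil_rZ hf)).
rewrite exchange_big /=.
rewrite -(sq2_sum (f := fun a b c => f a (S (S c) * (e b *: uu)))) /=;
  last by solve_tril ltac:(rewrite ?(bil_l hf) ?(bil_r hf) ?(bil_lZ hf) ?(bil_rZ hf)).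
apply: eq_bigr => p _.
transitivity (\sum_(d <- D p.2) e d.1 *: f p.1 (S (S d.2) * uu)).
  by apply: eq_bigr => d _; rewrite -scalerAr (linZ (f2 p.1)).
by rewrite (counitl_app (F := fun z => f p.1 (S (S z) * uu))) //;
  solve_lin ltac:(rewrite ?(bil_l hf) ?(bil_r hf) ?(bil_lZ hf) ?(bil_rZ hf)).
Qed.

Lemma LL (W : lmodType k) (f : H -> H -> W) : bil f ->
  \sum_(p <- R) f (S (S p.1) * uu) p.2 = \sum_(p <- R) f (uu * p.1) p.2.
Proof.
move=> hf; have [f1 f2] := hf; symmetry.
transitivity (\sum_(p <- R) \sum_(d <- D p.1) f (S (S d.2) * K d.1) p.2).
  by apply: eq_bigr => p _; rewrite -(idA uu p.1) (linS (f1 p.2)).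
have tr : tril (fun a b c => f (S (S b) * K a) c).
  split => [b c|a c|a b].
  - apply (lin_comp (g := K) (F := fun z => f (S (S b) * z) c) linK).
    by solve_lin ltac:(rewrite ?(bil_l hf) ?(bil_r hf) ?(bil_lZ hf) ?(bil_rZ hf)).
  - by solve_lin ltac:(rewrite ?(bil_l hf) ?(bil_r hf) ?(bil_lZ hf) ?(bil_rZ hf)).
  - by solve_lin ltac:(rewrite ?(bil_l hf) ?(bil_r hf) ?(bil_lZ hf) ?(bil_rZ hf)).
rewrite (sq1_sum tr) /=.
rewrite (KL (F := fun a b => \sum_(q <- R) f (S (S q.1) * a) (b * q.2))) /=;
  last by solve_bil ltac:(rewrite ?(bil_l hf) ?(bil_r hf) ?(bil_lZ hf) ?(bil_rZ hf)).
rewrite -(sq1_sum (f := fun a b c => f (S (S b) * (e a *: uu)) c)) /=;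
  last by solve_tril ltac:(rewrite ?(bil_l hf) ?(bil_r hf) ?(bil_lZ hf) ?(bil_rZ hf)).
apply: eq_bigr => p _.
transitivity (\sum_(d <- D p.1) e d.1 *: f (S (S d.2) * uu) p.2).
  by apply: eq_bigr => d _; rewrite -scalerAr (linZ (f1 p.2)).
by rewrite (counitl_app (F := fun z => f (S (S z) * uu) p.2)) //;
  solve_lin ltac:(rewrite ?(bil_l hf) ?(bil_r hf) ?(bil_lZ hf) ?(bil_rZ hf)).
Qed.

Lemma Su1 : S uu = \sum_(p <- R) S p.1 * S (S p.2).
Proof. by rewrite /uu /drinfeld (linS linS_); apply: eq_bigr => p _; rewrite Smul. Qed.

Lemma Su2 : S uu = \sum_(p <- R) p.1 * S p.2.
Proof. by rewrite Su1 (SS (f := fun a b => a * S b)) //; solve_bil idtac. Qed.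

Lemma part3 : uu * S uu = S uu * uu.
Proof.
symmetry.
rewrite {1}Su1 mulr_suml.
transitivity (\sum_(p <- R) S p.1 * (S (S p.2) * uu)).
  by apply: eq_bigr => p _; rewrite mulrA.
rewrite (LR (f := fun a b => S a * b)); last by solve_bil idtac.
rewrite -(SS (f := fun a b => S a * (uu * b))) /=; last by solve_bil idtac.
transitivity (\sum_(p <- R) (S (S p.1) * uu) * S p.2).
  by apply: eq_bigr => p _; rewrite mulrA.
rewrite (LL (f := fun a b => a * S b)); last by solve_bil idtac.
by rewrite Su2 mulr_sumr; apply: eq_bigr => p _; rewrite mulrA.
Qed.

Lemma part2 v : uu * v = 1 -> v * uu = 1 -> S (S v) = v.
Proof.
move=> h1 h2.
have S2u' : S (S uu) = uu := S2u.
by rewrite -[LHS]mulr1 -h1 mulrA -S2u' -SS2 h2 !S1 mul1r.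
Qed.

Lemma main_sec : let u := drinfeld S R in
  [/\ S (S u) = u,
      (forall v : H, u * v = 1 -> v * u = 1 -> S (S v) = v)
    & u * S u = S u * u].
Proof. by split; [exact: S2u | exact: part2 | exact: part3]. Qed.

End Main.

Unset Implicit Arguments.

Theorem corollary3p5 (k : fieldType) (H : algType k)
    (D : H -> seq (H * H)) (e : H -> k) (S : H -> H) (R : seq (H * H))
    (hH : hopf_algebra D e S) (hR : semiquasitriangular D S R) :
  let u := drinfeld S R in
  [/\ S (S u) = u,
      (forall v : H, u * v = 1 -> v * u = 1 -> S (S v) = v)
    & u * S u = S u * u].
Proof.
have [Si SiK SKi] := hS_bij hH.
have [Ri [hRi _]] := sq_inv hR.
exact: (main_sec hH hR SiK SKi hRi).
Qed.
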